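(* For $k=2$, every initial store $IS\in\{\Box,\blacksquare\}^2$ and all $i,j\in\{1,2\}$, there is no correct compositional translation from $\mathrm{SYNCSIMPLE}$ into $\mathrm{LOCKSIMPLE}_{2,IS}$ of blocking type $(P_iP_i,P_jP_j)$.
   Context: $\mathrm{SYNCSIMPLE}$: subprocesses $\mathcal{U} ::= \checkmark \mid 0 \mid\, !\mathcal{U} \mid\, ?\mathcal{U}$; processes are finite parallel compositions $\mathcal{U}_1\mid\cdots\mid\mathcal{U}_n$ ($\mid$ associative, commutative, $0$ a unit). Reduction: $!\mathcal{U}_1\mid ?\mathcal{U}_2\mid \mathcal{P}\to \mathcal{U}_1\mid\mathcal{U}_2\mid\mathcal{P}$. Successful: of form $\checkmark\mid\mathcal{P}$; may-convergent: reduces to a successful process; must-convergent: every reachable process is may-convergent. $\mathrm{LOCKSIMPLE}_{k,IS}$ ($IS\in\{\Box,\blacksquare\}^k$, $\Box$ empty, $\blacksquare$ full): subprocesses are words over $\{P_1,T_1,\dots,P_k,T_k\}$ followed by $0$ or $\checkmark$; states $(\mathcal{P},C)$ reduce by $(P_i\mathcal{U}\mid\mathcal{P},C)\to(\mathcal{U}\mid\mathcal{P},C[C_i:=\blacksquare])$ only if $C_i=\Box$, and $(T_i\mathcal{U}\mid\mathcal{P},C)\to(\mathcal{U}\mid\mathcal{P},C[C_i:=\Box])$ always. Success = process contains $\checkmark$; a process $\mathcal{P}$ is may/must-convergent iff the state $(\mathcal{P},IS)$ is. A compositional translation $\tau$ is given by words $\tau(!),\tau(?)$ with $\tau(0)=0$,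 $\tau(\checkmark)=\checkmark$, $\tau(!\mathcal{U})=\tau(!)\tau(\mathcal{U})$, $\tau(?\mathcal{U})=\tau(?)\tau(\mathcal{U})$, $\tau$ commuting with $\mid$; correct = preserves and reflects may- and must-convergence. Blocking type: for a word $S$, run $S$ as a single subprocess from $IS$; if it gets stuck at an occurrence of $P_i$, that occurrence ends the blocking prefix; if it is the first symbol from $\{P_i,T_i\}$ in $S$ (prefix $RP_i$, $R$ without $P_i,T_i$) the blocking type is $P_i$, otherwise the prefix has form $R_1P_iR_2P_i$, $R_2$ without $P_i,T_i$, and the blocking type is $P_iP_i$. $\tau$ has blocking type $(W_1,W_2)$ if $\tau(!)$ has type $W_1$ and $\tau(?)$ type $W_2$. *)

(* Defs.v *)
From mathcomp Require Import ssreflect ssrfun ssrbool eqtype ssrnat seq fintype.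
From Stdlib Require Import Permutation Relation_Operators.

Set Implicit Arguments.
Unset Strict Implicit.
Unset Printing Implicit Defensive.

Definition may_conv {S : Type} (step : S -> S -> Prop) (succ : S -> Prop) (x : S) : Prop :=
  exists y, clos_refl_trans S step x y /\ succ y.
Definition must_conv {S : Type} (step : S -> S -> Prop) (succ : S -> Prop) (x : S) : Prop :=
  forall y, clos_refl_trans S step x y -> may_conv step succ y.

Inductive SU : Type :=
| STick : SU
| SZero : SU
| SSnd : SU -> SU
| SRcv : SU -> SU.

(* Processes: finite parallel compositions, as lists up to permutation. *)
Definition SProc := list SU.

Inductive sstep : SProc -> SProc -> Prop :=
| sstep_sync u1 u2 rest P :
    Permutation P (SSnd u1 :: SRcv u2 :: rest) ->
    sstep P (u1 :: u2 :: rest).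

Definition ssucc (P : SProc) : Prop := exists rest, Permutation P (STick :: rest).

Definition s_may (P : SProc) := may_conv sstep ssucc P.
Definition s_must (P : SProc) := must_conv sstep ssucc P.

(* Locks are indexed by 'I_k (lock number i+1 of the paper is the ordinal i). *)
Inductive Sym (k : nat) : Type :=
| LP : 'I_k -> Sym k
| LT : 'I_k -> Sym k.

(* A subprocess is a word followed by 0 (false) or checkmark (true). *)
Definition LU (k : nat) := (list (Sym k) * bool)%type.
Definition LProc (k : nat) := list (LU k).
(* Store: true = full (black square), false = empty (white square). *)
Definition Store (k : nat) := 'I_k -> bool.
Definition upd k (C : Store k) (i : 'I_k) (b : bool) : Store k :=
  fun j => if j == i then b else C j.
Definition LState (k : nat) := (LProc k * Store k)%type.

Inductive lstep (k : nat) : LState k -> LState k -> Prop :=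
| lstep_P (P : LProc k) (C : Store k) i w e rest :
    Permutation P ((LP i :: w, e) :: rest) -> C i = false ->
    lstep (P, C) ((w, e) :: rest, upd C i true)
| lstep_T (P : LProc k) (C : Store k) i w e rest :
    Permutation P ((LT i :: w, e) :: rest) ->
    lstep (P, C) ((w, e) :: rest, upd C i false).

Definition lsucc k (s : LState k) : Prop :=
  exists rest, Permutation s.1 ((nil, true) :: rest).

Definition l_may k (IS : Store k) (P : LProc k) := may_conv (@lstep k) (@lsucc k) (P, IS).
Definition l_must k (IS : Store k) (P : LProc k) := must_conv (@lstep k) (@lsucc k) (P, IS).

(* Given by the words tsnd = tau(!) and trcv = tau(?). *)
Fixpoint tr_sub k (tsnd trcv : list (Sym k)) (u : SU) : LU k :=
  match u with
  | STick => (nil, true)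
  | SZero => (nil, false)
  | SSnd u' => (tsnd ++ (tr_sub tsnd trcv u').1, (tr_sub tsnd trcv u').2)
  | SRcv u' => (trcv ++ (tr_sub tsnd trcv u').1, (tr_sub tsnd trcv u').2)
  end.

Definition tr_proc k (tsnd trcv : list (Sym k)) (P : SProc) : LProc k :=
  List.map (tr_sub tsnd trcv) P.

Definition correct_translation k (IS : Store k) (tsnd trcv : list (Sym k)) : Prop :=
  forall P : SProc,
    (s_may P <-> l_may IS (tr_proc tsnd trcv P)) /\
    (s_must P <-> l_must IS (tr_proc tsnd trcv P)).

(* Run a word as a single subprocess; None = gets stuck. *)
Fixpoint exec k (C : Store k) (w : list (Sym k)) : option (Store k) :=
  match w with
  | nil => Some C
  | LP i :: w' => if C i then None else exec (upd C i true) w'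
  | LT i :: w' => exec (upd C i false) w'
  end.

Inductive BType (k : nat) : Type :=
| BT_P : 'I_k -> BType k
| BT_PP : 'I_k -> BType k.

Definition no_idx k (i : 'I_k) (R : list (Sym k)) : Prop :=
  ~ List.In (LP i) R /\ ~ List.In (LT i) R.

(* The blocking prefix of S (run from IS) is R ++ [P_i]: R runs without
   getting stuck and then P_i gets stuck. *)
Definition blocking_prefix k (IS : Store k) (S : list (Sym k)) (R : list (Sym k)) (i : 'I_k) : Prop :=
  exists rest C, S = R ++ LP i :: rest /\ exec IS R = Some C /\ C i = true.

Definition has_btype k (IS : Store k) (S : list (Sym k)) (bt : BType k) : Prop :=
  match bt with
  | BT_P i => exists R, blocking_prefix IS S R i /\ no_idx i R
  | BT_PP i => exists R1 R2, blocking_prefix IS S (R1 ++ LP i :: R2) i /\ no_idx i R2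
  end.

Definition translation_btype k (IS : Store k) (tsnd trcv : list (Sym k)) (b1 b2 : BType k) : Prop :=
  has_btype IS tsnd b1 /\ has_btype IS trcv b2.

(* Main.v *)
Require Import Defs.
From mathcomp Require Import ssreflect ssrfun ssrbool eqtype ssrnat seq fintype.
From Stdlib Require Import Permutation Relation_Operators Operators_Properties Classical.
From mathcomp Require Import zify.
From Stdlib Require List.

Set Implicit Arguments.
Unset Strict Implicit.
Unset Printing Implicit Defensive.

Definition occurs (k : 'I_2) (w : list (Sym 2)) : Prop :=
  List.In (LP k) w \/ List.In (LT k) w.

Definition bod (C : Store 2) (w : list (Sym 2)) : Prop :=
  w = [::] \/ exists k w', w = LP k :: w' /\ C k = true.

Lemma upd_same (C : Store 2) k b : upd C k b k = b.
Proof. by rewrite /upd eqxx. Qed.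

Lemma upd_other (C : Store 2) k k' b : k' <> k -> upd C k b k' = C k'.
Proof. move=> H; rewrite /upd; case: eqP => //. Qed.

Lemma occurs_nil k : ~ occurs k [::].
Proof. by case. Qed.

Lemma occurs_cons_inv k s w : occurs k (s :: w) -> s = LP k \/ s = LT k \/ occurs k w.
Proof.
case=> /= [[->|H]|[->|H]]; try by [left|right;left].
- by right; right; left.
- by right; right; right.
Qed.

Lemma exec_notin (w : list (Sym 2)) : forall (C D : Store 2) k,
  exec C w = Some D -> ~ occurs k w -> D k = C k.
Proof.
elim: w => [|s w IH] C D k /=.
- by case=> ->.
- case: s => k'.
  + case Ck': (C k') => // H Hn.
    have Hk: k <> k' by move=> E; apply: Hn; left; rewrite E; left.
    rewrite (IH _ _ _ H); first by rewrite upd_other.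
    by move=> [H1|H1]; apply: Hn; [left|right]; right.
  + move=> H Hn.
    have Hk: k <> k' by move=> E; apply: Hn; right; rewrite E; left.
    rewrite (IH _ _ _ H); first by rewrite upd_other.
    by move=> [H1|H1]; apply: Hn; [left|right]; right.
Qed.

Lemma exec_app_some (u v : list (Sym 2)) : forall (C D : Store 2),
  exec C u = Some D -> exec C (u ++ v) = exec D v.
Proof.
elim: u => [|s u IH] C D /=; first by case=> ->.
case: s => k; last by apply: IH.
by case: (C k) => //; apply: IH.
Qed.

Lemma exec_app_inv (u v : list (Sym 2)) : forall (C D : Store 2),
  exec C (u ++ v) = Some D -> exists E, exec C u = Some E /\ exec E v = Some D.
Proof.
elim: u => [|s u IH] C D /=; first by move=> H; exists C.
case: s => k; last by apply: IH.
by case: (C k) => //; apply: IH.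
Qed.

Lemma runmax (r : list (Sym 2)) : forall (C : Store 2),
  exists u v D, r = u ++ v /\ exec C u = Some D /\ bod D v.
Proof.
elim: r => [|s r IH] C.
- by exists [::], [::], C; split => //; split => //; left.
- case: s => k.
  + case Ck: (C k).
    * exists [::], (LP k :: r), C; split => //; split => //; right; by exists k, r.
    * have [u [v [D [E1 [E2 E3]]]]] := IH (upd C k true).
      exists (LP k :: u), v, D; rewrite E1; split => //; split => //=; by rewrite Ck.
  + have [u [v [D [E1 [E2 E3]]]]] := IH (upd C k false).
    exists (LT k :: u), v, D; rewrite E1; split => //.
Qed.

Lemma cmp (w : list (Sym 2)) : forall (C1 C2 D1 : Store 2), exec C1 w = Some D1 ->
  (exists D2, exec C2 w = Some D2 /\ (forall k, occurs k w -> D2 k = D1 k)) \/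
  (exists u k v D, w = u ++ LP k :: v /\ ~ occurs k u /\ C2 k = true /\ C1 k = false /\
     exec C2 u = Some D /\ D k = true).
Proof.
elim: w => [|s w IH] C1 C2 D1.
- move=> _; left; exists C2; split => // k; by move/occurs_nil.
- case: s => k /=.
  + case C1k: (C1 k) => // H1.
    case C2k: (C2 k).
    * right; exists [::], k, w, C2; split => //; split; first exact: occurs_nil.
      by split.
    * case: (IH _ (upd C2 k true) _ H1) => [[D2 [E2 Hag]]|[u [k' [v [D [Ew [Hn [Hc2 [Hc1 [Ex Hd]]]]]]]]]].
      - left; exists D2; split => // k' Hk'.
        case: (classic (occurs k' w)) => Hw; first exact: Hag.
        case: (occurs_cons_inv Hk') => [E|[E|E]]; last by [].
        + case: E => E; subst k'.
          rewrite (exec_notin E2 Hw) (exec_notin H1 Hw) !upd_same //.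
        + by [].
      - have Hkk: k' <> k by move=> E; subst k'; rewrite upd_same in Hc1.
        right; exists (LP k :: u), k', v, D; split; first by rewrite Ew.
        split.
        + move/occurs_cons_inv => [E|[E|E]].
          * by case: E => E; apply: Hkk.
          * by [].
          * exact: Hn E.
        + rewrite upd_other // in Hc2; rewrite upd_other // in Hc1.
          split => //; split => //; split => //=; by rewrite C2k.
  + move=> H1.
    case: (IH _ (upd C2 k false) _ H1) => [[D2 [E2 Hag]]|[u [k' [v [D [Ew [Hn [Hc2 [Hc1 [Ex Hd]]]]]]]]]].
    * left; exists D2; split => // k' Hk'.
      case: (classic (occurs k' w)) => Hw; first exact: Hag.
      case: (occurs_cons_inv Hk') => [E|[E|E]]; last by [].
      - by [].
      - case: E => E; subst k'.
        rewrite (exec_notin E2 Hw) (exec_notin H1 Hw) !upd_same //.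
    * have Hkk: k' <> k by move=> E; subst k'; rewrite upd_same in Hc2.
      right; exists (LT k :: u), k', v, D; split; first by rewrite Ew.
      split.
      { move/occurs_cons_inv => [E|[E|E]]; try (by []); try (by case: E => E; apply: Hkk); exact: Hn E. }
      rewrite upd_other // in Hc2; rewrite upd_other // in Hc1.

Qed.

Lemma two_locks (a b k : 'I_2) : a <> b -> k <> a -> k = b.
Proof.
case: a => [[|[|?]] Ha] //; case: b => [[|[|?]] Hb] //; case: k => [[|[|?]] Hk] //= Hab Hka;
  try (exfalso; apply: Hab; exact: val_inj);
  try (exfalso; apply: Hka; exact: val_inj);
  exact: val_inj.
Qed.

Lemma other_lock (a : 'I_2) : exists o : 'I_2, o <> a.
Proof.
case: a => [[|[|?]] Ha] //.
- by exists (@Ordinal 2 1 isT) => E; case: E.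
- by exists (@Ordinal 2 0 isT) => E; case: E.
Qed.
Lemma in2 {T : Type} (x a b : T) : List.In x [:: a; b] -> x = a \/ x = b.
Proof. by case=> [->|[->|[]]]; [left|right]. Qed.

Lemma exec_rt (u : list (Sym 2)) : forall (P : LProc 2) (C D : Store 2) v e rest,
  exec C u = Some D -> Permutation P ((u ++ v, e) :: rest) ->
  exists P', Permutation P' ((v, e) :: rest) /\
    clos_refl_trans _ (@lstep 2) (P, C) (P', D).
Proof.
elim: u => [|s u IH] P C D v e rest /=.
- case=> <- Hp; exists P; split => //; exact: rt_refl.
- case: s => k /=.
  + case Ck: (C k) => // Hex Hp.
    have Hs : lstep (P, C) ((u ++ v, e) :: rest, upd C k true) by apply: lstep_P.
    have [P' [Hp' Hrt]] := IH _ _ _ v e rest Hex (Permutation_refl _).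
    exists P'; split => //; apply: rt_trans; [apply: rt_step; exact: Hs | exact: Hrt].
  + move=> Hex Hp.
    have Hs : lstep (P, C) ((u ++ v, e) :: rest, upd C k false) by apply: lstep_T.
    have [P' [Hp' Hrt]] := IH _ _ _ v e rest Hex (Permutation_refl _).
    exists P'; split => //; apply: rt_trans; [apply: rt_step; exact: Hs | exact: Hrt].
Qed.

Lemma rt_nostep (x y : LState 2) : clos_refl_trans _ (@lstep 2) x y ->
  (forall z, ~ lstep x z) -> y = x.
Proof.
move=> H Hn; apply clos_rt_rt1n in H; inversion H; subst => //.
by exfalso; apply: (Hn y0).
Qed.

Lemma dead_state (P : LProc 2) (C : Store 2) w1 e1 w2 e2 :
  Permutation P [:: (w1, e1); (w2, e2)] -> bod C w1 -> bod C w2 ->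
  ~ (w1 = [::] /\ e1 = true) -> ~ (w2 = [::] /\ e2 = true) ->
  ~ may_conv (@lstep 2) (@lsucc 2) (P, C).
Proof.
move=> Hp B1 B2 N1 N2 [y [Hrt Hs]].
have Hn : forall z, ~ lstep (P, C) z.
{ move=> z Hz; inversion Hz as [P1 C1 i w e rest Hperm Hci|P1 C1 i w e rest Hperm]; subst.
  - have Hin : List.In (LP i :: w, e) [:: (w1, e1); (w2, e2)].
    { apply: Permutation_in; first exact: Hp.
      apply: Permutation_in; first exact: (Permutation_sym Hperm). by left. }
    case: (in2 Hin) => [[E1 E2]|[E1 E2]]; subst.
    + case: B1 => [//|[k' [w' [[E3 E4] E5]]]]; subst. by rewrite E5 in Hci.
    + case: B2 => [//|[k' [w' [[E3 E4] E5]]]]; subst. by rewrite E5 in Hci.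
  - have Hin : List.In (LT i :: w, e) [:: (w1, e1); (w2, e2)].
    { apply: Permutation_in; first exact: Hp.
      apply: Permutation_in; first exact: (Permutation_sym Hperm). by left. }
    case: (in2 Hin) => [[E1 E2]|[E1 E2]]; subst.
    + by case: B1 => [//|[k' [w' [E3 E4]]]].
    + by case: B2 => [//|[k' [w' [E3 E4]]]]. }
have Ey := rt_nostep Hrt Hn; subst y.
case: Hs => rest /= Hp2.
have Hin : List.In ([::], true) [:: (w1, e1); (w2, e2)].
{ apply: Permutation_in; first exact: Hp.
  apply: Permutation_in; first exact: (Permutation_sym Hp2). by left. }
case: (in2 Hin) => [[E1 E2]|[E1 E2]]; subst; [exact: N1 | exact: N2].
Qed.

Lemma must_dead (P0 : LProc 2) (C0 : Store 2) P C w1 e1 w2 e2 :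
  must_conv (@lstep 2) (@lsucc 2) (P0, C0) ->
  clos_refl_trans _ (@lstep 2) (P0, C0) (P, C) ->
  Permutation P [:: (w1, e1); (w2, e2)] -> bod C w1 -> bod C w2 ->
  ~ (w1 = [::] /\ e1 = true) -> ~ (w2 = [::] /\ e2 = true) -> False.
Proof.
move=> Hm Hrt Hp B1 B2 N1 N2.
exact: (dead_state Hp B1 B2 N1 N2 (Hm _ Hrt)).
Qed.

Inductive R2 (X Y : list (Sym 2)) (C0 : Store 2) :
  list (Sym 2) -> list (Sym 2) -> Store 2 -> Prop :=
| R2_init : R2 X Y C0 X Y C0
| R2_l (u v r : list (Sym 2)) (C D : Store 2) : R2 X Y C0 (u ++ v) r C -> exec C u = Some D -> R2 X Y C0 v r D
| R2_r (r u v : list (Sym 2)) (C D : Store 2) : R2 X Y C0 r (u ++ v) C -> exec C u = Some D -> R2 X Y C0 r v D.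

Lemma R2_lift X Y C0 rs rq C : R2 X Y C0 rs rq C -> forall xs ys ex ey,
  exists P, Permutation P [:: (rs ++ xs, ex); (rq ++ ys, ey)] /\
    clos_refl_trans _ (@lstep 2) ([:: (X ++ xs, ex); (Y ++ ys, ey)], C0) (P, C).
Proof.
elim=> [|u v r C1 D _ IH Hex|r u v C1 D _ IH Hex] xs ys ex ey.
- exists [:: (X ++ xs, ex); (Y ++ ys, ey)]; split => //; exact: rt_refl.
- have [P [Hp Hrt]] := IH xs ys ex ey.
  have Hp' : Permutation P ((u ++ (v ++ xs), ex) :: [:: (r ++ ys, ey)]) by rewrite catA.
  have [P' [Hp2 Hrt2]] := exec_rt Hex Hp'.
  exists P'; split => //; exact: rt_trans Hrt Hrt2.
- have [P [Hp Hrt]] := IH xs ys ex ey.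
  have Hp' : Permutation P ((u ++ (v ++ ys), ey) :: [:: (r ++ xs, ex)]).
  { rewrite catA; apply: Permutation_trans; first exact: Hp. exact: perm_swap. }
  have [P' [Hp2 Hrt2]] := exec_rt Hex Hp'.
  exists P'; split; last exact: rt_trans Hrt Hrt2.
  apply: Permutation_trans; first exact: Hp2. exact: perm_swap.
Qed.

Lemma R2_catr X Y Z C0 rs rq C : R2 X Y C0 rs rq C -> R2 X (Y ++ Z) C0 rs (rq ++ Z) C.
Proof.
elim=> [|u v rq' C1 D _ IH Hex|rs' u v C1 D _ IH Hex].
- exact: R2_init.
- exact: R2_l IH Hex.
- have IH' : R2 X (Y ++ Z) C0 rs' (u ++ (v ++ Z)) C1 by rewrite catA.
  exact: R2_r IH' Hex.
Qed.

Lemma R2_catl X Y Z C0 rs rq C : R2 X Y C0 rs rq C -> R2 (X ++ Z) Y C0 (rs ++ Z) rq C.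
Proof.
elim=> [|u v rq' C1 D _ IH Hex|rs' u v C1 D _ IH Hex].
- exact: R2_init.
- have IH' : R2 (X ++ Z) Y C0 (u ++ (v ++ Z)) rq' C1 by rewrite catA.
  exact: R2_l IH' Hex.
- exact: R2_r IH Hex.
Qed.

Lemma R2_dead X Y C0 xs ys ex ey rs rq C :
  must_conv (@lstep 2) (@lsucc 2) ([:: (X ++ xs, ex); (Y ++ ys, ey)], C0) ->
  R2 X Y C0 rs rq C -> bod C (rs ++ xs) -> bod C (rq ++ ys) ->
  ~ (rs ++ xs = [::] /\ ex = true) -> ~ (rq ++ ys = [::] /\ ey = true) -> False.
Proof.
move=> Hm HR B1 B2 N1 N2.
have [P [Hp Hrt]] := R2_lift HR xs ys ex ey.
exact: must_dead Hm Hrt Hp B1 B2 N1 N2.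
Qed.

Lemma ssucc_step (P Q : SProc) : ssucc P -> sstep P Q -> ssucc Q.
Proof.
move=> [rest Hp] Hs; inversion Hs as [u1 u2 rest' P' Hp' E1 E2]; subst.
have H1 : List.In STick P.
{ apply: Permutation_in; first exact: (Permutation_sym Hp). by left. }
have H2 : List.In STick (SSnd u1 :: SRcv u2 :: rest') by apply: Permutation_in Hp' H1.
have H3 : List.In STick (u1 :: u2 :: rest').
{ case: H2 => [E|[E|H]] //. by right; right. }
have [l1 [l2 E]] := List.in_split _ _ H3.
exists (List.app l1 l2); rewrite E.
apply: Permutation_sym; apply: Permutation_middle.
Qed.

Lemma ssucc_rt1n (x y : SProc) : clos_refl_trans_1n _ sstep x y -> ssucc x -> ssucc y.
Proof.
elim=> [//|x' y' z' Hs _ IH] Hx. apply: IH. exact: ssucc_step Hx Hs.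
Qed.

Lemma smust_of (P0 y0 : SProc) : sstep P0 y0 -> (forall y, sstep P0 y -> ssucc y) -> s_must P0.
Proof.
move=> H0 Hall y Hrt.
apply clos_rt_rt1n in Hrt; inversion Hrt as [|y1 z Hstep Hrest]; subst.
- exists y0; split; [exact: rt_step | exact: Hall].
- exists y; split; first exact: rt_refl.
  apply: ssucc_rt1n Hrest _. exact: Hall.
Qed.

Lemma sm_snd (u1 u2 : SU) : u1 = STick -> s_must [:: SSnd u1; SRcv u2].
Proof.
move=> ->.
apply: (@smust_of _ [:: STick; u2]); first by apply: sstep_sync; apply: Permutation_refl.
move=> y Hs; inversion Hs as [v1 v2 rest P Hp E1 E2]; subst.
have Hin : List.In (SSnd v1) [:: SSnd STick; SRcv u2].
{ apply: Permutation_in; first exact: (Permutation_sym Hp). by left. }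
case: Hin => [[<-]|[E|[]]] //.
by exists (v2 :: rest); apply: Permutation_refl.
Qed.

Lemma sm_rcv (u1 u2 : SU) : u2 = STick -> s_must [:: SSnd u1; SRcv u2].
Proof.
move=> ->.
apply: (@smust_of _ [:: u1; STick]); first by apply: sstep_sync; apply: Permutation_refl.
move=> y Hs; inversion Hs as [v1 v2 rest P Hp E1 E2]; subst.
have Hin : List.In (SRcv v2) [:: SSnd u1; SRcv STick].
{ apply: Permutation_in; first exact: (Permutation_sym Hp). by right; left. }
case: Hin => [E|[[<-]|[]]] //.
by exists (v1 :: rest); apply: perm_swap.
Qed.

Lemma occurs_catl k (u1 u2 : list (Sym 2)) : occurs k u1 -> occurs k (u1 ++ u2).
Proof.
elim: u1 => [|s u1 IH] /=; first by move/occurs_nil.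
move=> [[E|H]|[E|H]].
- by left; left.
- by case: (IH (or_introl H)) => H'; [left|right]; right.
- by right; left.
- by case: (IH (or_intror H)) => H'; [left|right]; right.
Qed.

Lemma in_mid (x : Sym 2) (l1 l2 : list (Sym 2)) : List.In x (l1 ++ x :: l2).
Proof. elim: l1 => [|y l1 IH] /=; [by left | by right]. Qed.

Lemma bod_LP (C : Store 2) k w : C k = true -> bod C (LP k :: w).
Proof. by move=> H; right; exists k, w. Qed.

Lemma bod_cat0 (C : Store 2) w : bod C w -> bod C (w ++ [::]).
Proof. by rewrite cats0. Qed.

Lemma not_bod_LP (C : Store 2) k w : C k = false -> ~ bod C (LP k :: w).
Proof. by move=> H [//|[k' [w' [[E1 E2] E3]]]]; subst; rewrite H in E3. Qed.

Lemma cons_nnil {T : Type} (x : T) w : ~ (x :: w = [::] /\ true = true) /\ ~ (x :: w = [::] /\ false = true).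
Proof. by split => [[]|[]]. Qed.

Lemma alphaT1 (IS : Store 2) (S Q RS restS : list (Sym 2)) (CS : Store 2) (i : 'I_2) u v :
  must_conv (@lstep 2) (@lsucc 2) ([:: (S ++ [::], true); (Q ++ [::], false)], IS) ->
  S = RS ++ LP i :: restS -> exec IS RS = Some CS -> CS i = true ->
  Q = u ++ LP i :: v -> ~ occurs i u -> False.
Proof.
move=> M ES ExS CSi EQ Hn.
have H0 : R2 S Q IS (RS ++ LP i :: restS) Q IS by rewrite -ES; exact: R2_init.
have H1 := R2_l H0 ExS.
have [u1 [u2 [D [Eu [Ex1 B2]]]]] := runmax u CS.
have Di : D i = true.
{ rewrite (exec_notin Ex1) // => Ho; apply: Hn; rewrite Eu; exact: occurs_catl. }
have H1' : R2 S Q IS (LP i :: restS) (u1 ++ (u2 ++ LP i :: v)) CS by rewrite catA -Eu -EQ.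
have H2 := R2_r H1' Ex1.
apply: (R2_dead M H2); try (apply: bod_cat0).
- exact: bod_LP.
- case: B2 => [->|[k [w' [-> Dk]]]]; [exact: bod_LP | exact: bod_LP].
- by case.
- by case=> _.
Qed.

Lemma alphaT2 (IS : Store 2) (S Q RQ restQ : list (Sym 2)) (CQ : Store 2) (j : 'I_2) u v :
  must_conv (@lstep 2) (@lsucc 2) ([:: (S ++ [::], false); (Q ++ [::], true)], IS) ->
  Q = RQ ++ LP j :: restQ -> exec IS RQ = Some CQ -> CQ j = true ->
  S = u ++ LP j :: v -> ~ occurs j u -> False.
Proof.
move=> M EQ ExQ CQj ES Hn.
have H0 : R2 S Q IS S (RQ ++ LP j :: restQ) IS by rewrite -EQ; exact: R2_init.
have H1 := R2_r H0 ExQ.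
have [u1 [u2 [D [Eu [Ex1 B2]]]]] := runmax u CQ.
have Dj : D j = true.
{ rewrite (exec_notin Ex1) // => Ho; apply: Hn; rewrite Eu; exact: occurs_catl. }
have H1' : R2 S Q IS (u1 ++ (u2 ++ LP j :: v)) (LP j :: restQ) CQ by rewrite catA -Eu -ES.
have H2 := R2_l H1' Ex1.
apply: (R2_dead M H2); try (apply: bod_cat0).
- case: B2 => [->|[k [w' [-> Dk]]]]; [exact: bod_LP | exact: bod_LP].
- exact: bod_LP.
- by case=> _.
- by case.
Qed.

Lemma sync_gen (IS : Store 2) (S RS restS : list (Sym 2)) (CS : Store 2) (a : 'I_2) :
  S = RS ++ LP a :: restS -> exec IS RS = Some CS -> CS a = true -> List.In (LP a) RS ->
  (forall u k v, RS = u ++ LP k :: v -> ~ occurs k u -> k = a) ->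
  forall C, exists u v D, S = u ++ LP a :: v /\ exec C u = Some D /\ D a = true.
Proof.
move=> ES ExS CSa Hin Hfirst C.
case: (cmp C ExS) => [[D2 [Ex2 Hag]]|[u [k [v [D [Eu [Hn [Hc2 [Hc1 [Exu Dk]]]]]]]]]].
- exists RS, restS, D2; split => //; split => //.
  by rewrite Hag //; left.
- have Eka := Hfirst _ _ _ Eu Hn; subst k.
  exists u, (v ++ LP a :: restS), D; split => //.
  by rewrite ES Eu -catA.
Qed.

Lemma nn1 (x : Sym 2) w (e : bool) : ~ ((x :: w) ++ [::] = [::] /\ e = true).
Proof. by case. Qed.

Lemma nn2 (x : Sym 2) w : x :: w <> [::].
Proof. by []. Qed.

Lemma bod_LP_inv (C : Store 2) a w : bod C (LP a :: w) -> C a = true.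
Proof. by case=> [//|[k [w' [[E1 E2] E3]]]]; subst. Qed.

Lemma alt (IS : Store 2) (S Q : list (Sym 2)) (a b : 'I_2) :
  a <> b ->
  must_conv (@lstep 2) (@lsucc 2) ([:: (S ++ [::], true); (Q ++ [::], false)], IS) ->
  must_conv (@lstep 2) (@lsucc 2) ([:: (S ++ [::], false); (Q ++ [::], true)], IS) ->
  must_conv (@lstep 2) (@lsucc 2) ([:: (S ++ [::], true); ((Q ++ S) ++ [::], false)], IS) ->
  must_conv (@lstep 2) (@lsucc 2) ([:: ((S ++ Q) ++ [::], false); (Q ++ [::], true)], IS) ->
  (forall C, exists u v D, S = u ++ LP a :: v /\ exec C u = Some D /\ D a = true) ->
  (forall C, exists u v D, Q = u ++ LP b :: v /\ exec C u = Some D /\ D b = true) ->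
  False.
Proof.
move=> Hab M1 M2 M3 M4 SyS SyQ.
have Hba : b <> a by move=> E; apply: Hab.
have D1 : forall rs rq C, R2 S Q IS rs rq C -> bod C rs -> bod C rq -> rs <> [::] -> False.
{ move=> rs rq C HR B1 B2 Hne.
  apply: (R2_dead M1 HR); try apply: bod_cat0 => //.
  - by rewrite cats0 => [[E _]].
  - by case=> _. }
have key : forall n rs rq C, size rs + size rq <= n -> R2 S Q IS rs rq C ->
   ((exists rs', rs = LP a :: rs') /\ ~ bod C rq) \/
   ((exists rq', rq = LP b :: rq') /\ ~ bod C rs) -> False.
{ elim=> [|n IH] rs rq C Hsz HR.
  - case=> [[[rs' E] _]|[[rq' E] _]]; subst; by rewrite /= ?addnS in Hsz.
  - case=> [[[rs' Ers] Nrq]|[[rq' Erq] Nrs]].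
    +
      have [u [v [D [Erq [Exu Bv]]]]] := runmax rq C.
      have Hu : u <> [::].
      { move=> Eu; subst u; case: Exu => ED; subst D. by apply: Nrq; rewrite Erq. }
      have HR' : R2 S Q IS rs v D by apply: R2_r _ Exu; rewrite -Erq.
      have Hsz' : size rs + size v <= n.
      { move: Hsz; rewrite Erq size_cat.
        case: u Hu {Erq Exu} => [//|s u] _ /=. lia. }
      case: Bv => [Ev|[k [v' [Ev Dk]]]].
      * subst v.
        case Da: (D a).
        -- apply: (D1 _ _ _ HR'); [by rewrite Ers; exact: bod_LP | by left | by rewrite Ers; apply: nn2].
        -- (* steal in T* *)
           have HR3 : R2 S (Q ++ S) IS rs ([::] ++ S) D := R2_catr S HR'.
           have [u' [v'' [D' [ES [Exu' Da']]]]] := SyS D.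
           have HR3' : R2 S (Q ++ S) IS rs (u' ++ LP a :: v'') D by rewrite -ES.
           have HR4 := R2_r HR3' Exu'.
           apply: (R2_dead M3 HR4); try apply: bod_cat0.
           ++ by rewrite Ers; exact: bod_LP.
           ++ exact: bod_LP.
           ++ by rewrite Ers; apply: nn1.
           ++ by case=> _.
      * subst v.
        case: (classic (k = a)) => Hka.
        -- subst k. apply: (D1 _ _ _ HR'); [by rewrite Ers; exact: bod_LP | exact: bod_LP | by rewrite Ers; apply: nn2].
        -- have Ekb := two_locks Hab Hka; subst k.
           case Da: (D a).
           ++ apply: (D1 _ _ _ HR'); [by rewrite Ers; exact: bod_LP | exact: bod_LP | by rewrite Ers; apply: nn2].
           ++ apply: (IH rs (LP b :: v') D Hsz' HR'); right; split; first by exists v'.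
              rewrite Ers; exact: not_bod_LP.
    +
      have [u [v [D [Ers [Exu Bv]]]]] := runmax rs C.
      have Hu : u <> [::].
      { move=> Eu; subst u; case: Exu => ED; subst D. by apply: Nrs; rewrite Ers. }
      have HR' : R2 S Q IS v rq D by apply: R2_l _ Exu; rewrite -Ers.
      have Hsz' : size v + size rq <= n.
      { move: Hsz; rewrite Ers size_cat.
        case: u Hu {Ers Exu} => [//|s u] _ /=. lia. }
      case: Bv => [Ev|[k [v' [Ev Dk]]]].
      * subst v.
        case Db: (D b).
        -- apply: (R2_dead M2 HR'); try apply: bod_cat0.
           ++ by left.
           ++ by rewrite Erq; exact: bod_LP.
           ++ by case=> _.
           ++ by rewrite Erq; apply: nn1.
        -- (* steal in T** *)
           have HR3 : R2 (S ++ Q) Q IS ([::] ++ Q) rq D := R2_catl Q HR'.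
           have [u' [v'' [D' [EQ [Exu' Db']]]]] := SyQ D.
           have HR3' : R2 (S ++ Q) Q IS (u' ++ LP b :: v'') rq D by rewrite -EQ.
           have HR4 := R2_l HR3' Exu'.
           apply: (R2_dead M4 HR4); try apply: bod_cat0.
           ++ exact: bod_LP.
           ++ by rewrite Erq; exact: bod_LP.
           ++ by case=> _.
           ++ by rewrite Erq; apply: nn1.
      * subst v.
        case: (classic (k = b)) => Hkb.
        -- subst k. apply: (D1 _ _ _ HR'); [exact: bod_LP | by rewrite Erq; exact: bod_LP | by []].
        -- have Eka := two_locks Hba Hkb; subst k.
           case Db: (D b).
           ++ apply: (D1 _ _ _ HR'); [exact: bod_LP | by rewrite Erq; exact: bod_LP | by []].
           ++ apply: (IH (LP a :: v') rq D Hsz' HR'); left; split; first by exists v'.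
              rewrite Erq; exact: not_bod_LP. }
have [u [v [D [EQ [Exu Db]]]]] := SyQ IS.
have HR0 : R2 S Q IS S (u ++ LP b :: v) IS by rewrite -EQ; exact: R2_init.
have HR := R2_r HR0 Exu.
have [us [vs [Ds [ES _]]]] := SyS IS.
have Sne : S <> [::] by rewrite ES; case: us {ES}.
case: (classic (bod D S)) => BS.
- exact: (D1 _ _ _ HR BS (bod_LP _ Db) Sne).
- apply: (key _ S (LP b :: v) D (leqnn _) HR); right; split => //; by exists v.
Qed.

Lemma case_same (IS : Store 2) (S Q RS RQ restS restQ : list (Sym 2)) (CS CQ : Store 2) (a : 'I_2) :
  must_conv (@lstep 2) (@lsucc 2) ([:: (S ++ [::], true); (Q ++ [::], false)], IS) ->
  must_conv (@lstep 2) (@lsucc 2) ([:: (S ++ [::], false); (Q ++ [::], true)], IS) ->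
  S = RS ++ LP a :: restS -> exec IS RS = Some CS -> CS a = true -> List.In (LP a) RS ->
  Q = RQ ++ LP a :: restQ -> exec IS RQ = Some CQ -> CQ a = true -> List.In (LP a) RQ ->
  False.
Proof.
move=> M1 M2 ES ExS CSa HinS EQ ExQ CQa HinQ.
have FQ := fun u v => @alphaT1 IS S Q RS restS CS a u v M1 ES ExS CSa.
have FS := fun u v => @alphaT2 IS S Q RQ restQ CQ a u v M2 EQ ExQ CQa.
have [o Hoa] := other_lock a.
have Hao : a <> o by move=> E; apply: Hoa.
have HR0 : R2 S Q IS S (RQ ++ LP a :: restQ) IS by rewrite -EQ; exact: R2_init.
have HR1 := R2_r HR0 ExQ.
case: (cmp CQ ExS) => [[D2 [Ex2 Hag]]|[u [k [v [D [Eu [Hn [Hc2 [Hc1 [Exu Dk]]]]]]]]]].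
- have HR1' : R2 S Q IS (RS ++ LP a :: restS) (LP a :: restQ) CQ by rewrite -ES.
  have HR2 := R2_l HR1' Ex2.
  have D2a : D2 a = true by rewrite Hag //; left.
  apply: (R2_dead M1 HR2); try apply: bod_cat0.
  + exact: bod_LP.
  + exact: bod_LP.
  + exact: nn1.
  + by case=> _.
- case: (classic (k = a)) => Hka.
  + subst k. apply: (FS u (v ++ LP a :: restS)); last exact: Hn.
    by rewrite ES Eu -catA.
  + have Eko := two_locks Hao Hka; subst k.
    have ExRS : exec IS (u ++ LP o :: v) = Some CS by rewrite -Eu.
    have [E [ExE ExE2]] := exec_app_inv ExRS.
    have Eo : E o = false by rewrite (exec_notin ExE Hn).
    have ES' : S = u ++ (LP o :: v ++ LP a :: restS) by rewrite ES Eu -catA.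
    have HRu0 : R2 S Q IS (u ++ (LP o :: v ++ LP a :: restS)) Q IS
      by rewrite -ES'; exact: R2_init.
    have HRu := R2_l HRu0 ExE.
    have HRu' : R2 S Q IS (LP o :: v ++ LP a :: restS) (RQ ++ LP a :: restQ) E by rewrite -EQ.
    case: (cmp E ExQ) => [[D3 [Ex3 Hag3]]|[u' [k' [v' [D' [Eu' [Hn' [Hc2' [Hc1' _]]]]]]]]].
    * have HR3 := R2_r HRu' Ex3.
      have D3a : D3 a = true by rewrite Hag3 //; left.
      have Hoc : occurs o RQ.
      { case: (classic (occurs o RQ)) => // Hno.
        have := exec_notin ExQ Hno. by rewrite Hc2 Hc1. }
      have D3o : D3 o = true by rewrite Hag3 // Hc2.
      apply: (R2_dead M1 HR3); try apply: bod_cat0.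
      -- exact: bod_LP.
      -- exact: bod_LP.
      -- exact: nn1.
      -- by case=> _.
    * case: (classic (k' = a)) => Hk'a.
      -- subst k'. apply: (FQ u' (v' ++ LP a :: restQ)); last exact: Hn'.
         by rewrite EQ Eu' -catA.
      -- have Ek'o := two_locks Hao Hk'a; subst k'.
         by rewrite Eo in Hc2'.
Qed.

Theorem proposition5p9 :
  forall (IS : Store 2) (i j : 'I_2) (tsnd trcv : list (Sym 2)),
    translation_btype IS tsnd trcv (BT_PP i) (BT_PP j) ->
    ~ correct_translation IS tsnd trcv.
Proof.
move=> IS i j S Q [[R1 [R2' [[restS [CS [ES [ExS CSi]]]] _]]]
  [R1' [R2'' [[restQ [CQ [EQ [ExQ CQj]]]] _]]]] Hc.
have M1 : must_conv (@lstep 2) (@lsucc 2) ([:: (S ++ [::], true); (Q ++ [::], false)], IS).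
{ exact: (proj1 (proj2 (Hc [:: SSnd STick; SRcv SZero])) (@sm_snd STick SZero erefl)). }
have M2 : must_conv (@lstep 2) (@lsucc 2) ([:: (S ++ [::], false); (Q ++ [::], true)], IS).
{ exact: (proj1 (proj2 (Hc [:: SSnd SZero; SRcv STick])) (@sm_rcv SZero STick erefl)). }
have M3 : must_conv (@lstep 2) (@lsucc 2) ([:: (S ++ [::], true); ((Q ++ S) ++ [::], false)], IS).
{ rewrite -catA.
  exact: (proj1 (proj2 (Hc [:: SSnd STick; SRcv (SSnd SZero)])) (@sm_snd STick (SSnd SZero) erefl)). }
have M4 : must_conv (@lstep 2) (@lsucc 2) ([:: ((S ++ Q) ++ [::], false); (Q ++ [::], true)], IS).
{ rewrite -catA.
  exact: (proj1 (proj2 (Hc [:: SSnd (SRcv SZero); SRcv STick])) (@sm_rcv (SRcv SZero) STick erefl)). }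
have HinS : List.In (LP i) (R1 ++ LP i :: R2') by apply: in_mid.
have HinQ : List.In (LP j) (R1' ++ LP j :: R2'') by apply: in_mid.
case: (classic (i = j)) => Hij.
- subst j. exact: (case_same M1 M2 ES ExS CSi HinS EQ ExQ CQj HinQ).
- have Hji : j <> i by move=> E; apply: Hij.
  have FS : forall u k v, R1 ++ LP i :: R2' = u ++ LP k :: v -> ~ occurs k u -> k = i.
  { move=> u k v Eu Hn.
    case: (classic (k = j)) => Hkj; last exact: two_locks Hji Hkj.
    subst k; exfalso.
    apply: (@alphaT2 IS S Q _ restQ CQ j u (v ++ LP i :: restS) M2 EQ ExQ CQj); last exact: Hn.
    by rewrite ES Eu -catA. }
  have FQ : forall u k v, R1' ++ LP j :: R2'' = u ++ LP k :: v -> ~ occurs k u -> k = j.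
  { move=> u k v Eu Hn.
    case: (classic (k = i)) => Hki; last exact: two_locks Hij Hki.
    subst k; exfalso.
    apply: (@alphaT1 IS S Q _ restS CS i u (v ++ LP j :: restQ) M1 ES ExS CSi); last exact: Hn.
    by rewrite EQ Eu -catA. }
  have SyS := sync_gen ES ExS CSi HinS FS.
  have SyQ := sync_gen EQ ExQ CQj HinQ FQ.
  exact: (alt Hij M1 M2 M3 M4 SyS SyQ).
Qed.
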